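(* Let $(A_C,\mathcal R_A)$ be an autocatalytic core of a CRN and let $\overline{\mathbb S}_C=(\mathbb S)_{A_C}^{\mathcal R_A}$ (a square invertible matrix). Then every column of $\overline{\mathbb S}_C^{-1}$ is semi-positive, i.e. $\overline{\mathbb S}_C^{-1}$ has only nonnegative entries and no zero column.
   Context: A chemical reaction network (CRN) consists of a finite species set $\mathcal S$ and a finite set $\mathcal R$ of reactions; each reaction $r$ is written $r^-\to r^+$ with input complex $r^-\in\mathbb Z_{\ge0}^{\mathcal S}$ and output complex $r^+\in\mathbb Z_{\ge0}^{\mathcal S}$. The input and output matrices $\mathbb S^-,\mathbb S^+$ are the $\mathcal S\times\mathcal R$ matrices whose column indexed by $r$ is $r^-$, resp. $r^+$; the stoichiometric matrix is $\mathbb S=\mathbb S^+-\mathbb S^-$. For a matrix $\mathbb A$ with rows indexed by $\mathcal S$ and columns by $\mathcal R$ and subsets $M\subseteq\mathcal S$, $N\subseteq\mathcal R$, $(\mathbb A)_M^N$ is the submatrix with rows in $M$ and columns in $N$. For a vector $\mathbf v$: $\mathbf v\gg\mathbf 0$ means all entries are $>0$; $\mathbf v>\mathbf 0$ (semi-positive) means all entries are $\ge0$ and $\mathbf v\ne\mathbf 0$. A motif is a pair $(\mathcal M,\mathcal R')$ with $\mathcal M\subseteq\mathcal S$, $\mathcal R'\subseteq\mathcal R$. It is exclusively autocatalytic if: (i) there is $\mathbf v\in\mathbb R^{\mathcal R'}$, $\mathbf v\gg\mathbf0$, with $(\mathbb S)_{\mathcal M}^{\mathcal R'}\mathbf v\gg\mathbf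 0$; (ii) every row of $(\mathbb S^-)_{\mathcal M}^{\mathcal R'}$ is semi-positive; (iii) every column of $(\mathbb S^-)_{\mathcal M}^{\mathcal R'}$ is semi-positive. An autocatalytic core is an exclusively autocatalytic motif $(A_C,\mathcal R_A)$ such that no motif $(\mathcal M',\mathcal R'')\neq(A_C,\mathcal R_A)$ with $\mathcal M'\subseteq A_C$ and $\mathcal R''\subseteq\mathcal R_A$ is exclusively autocatalytic. *)

(* Defs.v *)
From HB Require Import structures.
From mathcomp Require Import all_boot all_order all_algebra.
Set Implicit Arguments. Unset Strict Implicit. Unset Printing Implicit Defensive.
Import Order.TTheory GRing.Theory Num.Theory.
Local Open Scope ring_scope.

(* A CRN is given by a finite species type [Sp], a finite reaction type [Rx],
   and the input / output matrices [inp out : Sp -> Rx -> nat]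
   (inp i r = (r^-)_i, out i r = (r^+)_i). *)

Definition stoich (R : numDomainType) (Sp Rx : finType)
  (inp out : Sp -> Rx -> nat) (i : Sp) (r : Rx) : R :=
  (out i r)%:R - (inp i r)%:R.

(* Exclusively autocatalytic motif (M, N).  Entries of S^- are natural numbers,
   so "row/column semi-positive" means "some entry is > 0".
   Motifs are required to be nonempty (M != set0). *)
Definition excl_autocat (R : realFieldType) (Sp Rx : finType)
  (inp out : Sp -> Rx -> nat) (M : {set Sp}) (N : {set Rx}) : Prop :=
  [/\ M != set0,
      (exists v : Rx -> R,
          (forall r, r \in N -> 0 < v r) /\
          (forall i, i \in M -> 0 < \sum_(r in N) stoich R inp out i r * v r)),
      (forall i, i \in M -> exists2 r, r \in N & (0 < inp i r)%N) &
      (forall r, r \in N -> exists2 i, i \in M & (0 < inp i r)%N)].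

Definition autocat_core (R : realFieldType) (Sp Rx : finType)
  (inp out : Sp -> Rx -> nat) (A : {set Sp}) (N : {set Rx}) : Prop :=
  excl_autocat R inp out A N /\
  forall (M' : {set Sp}) (N' : {set Rx}), M' \subset A -> N' \subset N ->
    (M', N') <> (A, N) -> ~ excl_autocat R inp out M' N'.

Definition is_inverse_sub (R : realFieldType) (Sp Rx : finType)
  (inp out : Sp -> Rx -> nat) (A : {set Sp}) (N : {set Rx})
  (B : Rx -> Sp -> R) : Prop :=
  (forall i k, i \in A -> k \in A ->
     \sum_(r in N) stoich R inp out i r * B r k = (i == k)%:R) /\
  (forall r l, r \in N -> l \in N ->
     \sum_(i in A) B r i * stoich R inp out i l = (r == l)%:R).

(* Main.v *)
Require Import Defs.
From HB Require Import structures.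
From mathcomp Require Import all_boot all_order all_algebra.
Import Order.TTheory GRing.Theory Num.Theory.
Local Open Scope ring_scope.

Lemma argmin_seq (R : realDomainType) (T : eqType) (P : pred T) (f : T -> R)
  (s : seq T) : has P s ->
  exists2 y, P y & forall z, z \in s -> P z -> f y <= f z.
Proof.
elim: s => [//|a s IH] /=.
case Pa: (P a) => /=.
  case hs: (has P s).
    case: (IH hs) => y Py Hy.
    case: (leP (f a) (f y)) => hay.
      exists a => // z; rewrite inE => /orP[/eqP->//|zs Pz].
      exact: le_trans hay (Hy z zs Pz).
    exists y => // z; rewrite inE => /orP[/eqP->_|zs Pz]; last exact: Hy.
    exact: ltW.
  exists a => // z; rewrite inE => /orP[/eqP->//|zs Pz].
  by move/hasPn: hs => /(_ z zs); rewrite Pz.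
move=> hs; case: (IH hs) => y Py Hy; exists y => // z.
rewrite inE => /orP[/eqP->|]; first by rewrite Pa.
exact: Hy.
Qed.

Lemma argmin_fin (R : realDomainType) (T : finType) (P : pred T) (f : T -> R) x0 :
  P x0 -> exists2 y, P y & forall z, P z -> f y <= f z.
Proof.
move=> Px0; have: has P (enum T) by apply/hasP; exists x0; rewrite ?mem_enum.
move=> /(@argmin_seq R _ _ f) [y Py Hy]; exists y => // z; apply: Hy.
by rewrite mem_enum.
Qed.

Section Core.
Variables (R : realFieldType) (Sp Rx : finType) (inp out : Sp -> Rx -> nat)
  (A : {set Sp}) (N : {set Rx}).
Hypothesis core : autocat_core R inp out A N.
Local Notation S := (stoich R inp out).

Lemma shrink (w : Rx -> R) :
  (forall r, r \in N -> 0 <= w r) ->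
  (forall i, i \in A -> 0 < \sum_(r in N) S i r * w r) ->
  forall r0, r0 \in N -> w r0 = 0 -> False.
Proof.
move=> w0 wpos r0 r0N wr0.
case: core => [[An0 _ rows cols] min].
pose N' := [set r in N | 0 < w r].
pose M' := [set i in A | [exists r in N', (0 < inp i r)%N]].
have eqs i : \sum_(r in N') S i r * w r = \sum_(r in N) S i r * w r.
  rewrite (eq_bigl (fun r => (r \in N) && (0 < w r))); last by move=> r; rewrite inE.
  rewrite big_mkcondr /=; apply: eq_bigr => r rN.
  case: ifP => // /negbT; rewrite -leNgt => h.
  have -> : w r = 0 by apply/eqP; rewrite eq_le h w0.
  by rewrite mulr0.
apply: (min M' N').
- by apply/subsetP => i; rewrite inE => /andP[].
- by apply/subsetP => r; rewrite inE => /andP[].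
- move=> [_ eN]; have : r0 \in N' by rewrite eN.
  by rewrite inE wr0 ltxx andbF.
split.
- case/set0Pn: An0 => i iA.
  have : \sum_(r in N) S i r * w r != 0 by rewrite gt_eqF ?wpos.
  case: (boolP [exists r in N, w r != 0]) => [/existsP[r /andP[rN wr]] _|].
    have rN' : r \in N' by rewrite inE rN lt_def wr w0.
    case: (cols r rN) => j jA jr.
    apply/set0Pn; exists j; rewrite inE jA; apply/existsP; exists r.
    by rewrite rN' jr.
  move/existsPn => h; rewrite big1 ?eqxx // => r rN.
  by move: (h r); rewrite rN /= negbK => /eqP->; rewrite mulr0.
- exists w; split; first by move=> r; rewrite inE => /andP[].
  by move=> i; rewrite inE eqs => /andP[iA _]; apply: wpos.
- by move=> i; rewrite inE => /andP[_ /existsP[r /andP[rN' ir]]]; exists r.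
- move=> r; rewrite inE => /andP[rN wr]; case: (cols r rN) => j jA jr.
  exists j => //; rewrite inE jA; apply/existsP; exists r.
  by rewrite inE rN wr jr.
Qed.

Lemma nonneg (x : Rx -> R) :
  (forall i, i \in A -> 0 <= \sum_(r in N) S i r * x r) ->
  forall r, r \in N -> 0 <= x r.
Proof.
move=> hx r1 r1N; rewrite leNgt; apply/negP => xr1.
case: (core) => [[_ [v [vpos Svpos]] _ _] _].
have [r0 /andP[r0N xr0] Hr0] := @argmin_fin R Rx (fun r => (r \in N) && (x r < 0))
   (fun r => v r / - x r) r1 (introT andP (conj r1N xr1)).
pose t := v r0 / - x r0.
have tpos : 0 < t by rewrite divr_gt0 ?vpos // oppr_gt0.
apply: (@shrink (fun r => v r + t * x r) _ _ r0 r0N).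
- move=> r rN; case: (ltP (x r) 0) => xr.
    have := Hr0 r; rewrite rN xr => /(_ isT).
    rewrite -/t ler_pdivlMr ?oppr_gt0 // => h.
    by rewrite -subr_ge0 mulrN opprK in h.
  by apply: addr_ge0; [exact: ltW (vpos r rN) | exact: mulr_ge0 (ltW tpos) xr].
- move=> i iA.
  under eq_bigr do rewrite mulrDr mulrCA.
  rewrite big_split /= -mulr_sumr.
  by rewrite ltr_wpDr ?Svpos // mulr_ge0 ?hx // ltW.
- have xr0n : x r0 != 0 by rewrite lt_eqF.
  by rewrite /t invrN mulrN mulNr -mulrA mulVf // mulr1 subrr.
Qed.

Lemma kernel0 (x : Rx -> R) :
  (forall i, i \in A -> \sum_(r in N) S i r * x r = 0) ->
  forall r, r \in N -> x r = 0.
Proof.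
move=> hx r rN; apply/eqP; rewrite eq_le; apply/andP; split.
  rewrite -oppr_ge0; apply: (@nonneg (fun r => - x r)) => // i iA.
  under eq_bigr do rewrite mulrN.
  by rewrite sumrN hx // oppr0.
by apply: nonneg => // i iA; rewrite hx.
Qed.

Lemma private i : i \in A ->
  exists2 r, r \in N & (0 < inp i r)%N && [forall j in A, (j != i) ==> (inp j r == 0)%N].
Proof.
move=> iA.
case: (boolP [exists r in N, (0 < inp i r)%N && [forall j in A, (j != i) ==> (inp j r == 0)%N]]).
  by case/existsP => r /andP[rN h]; exists r.
move/existsPn => np; exfalso.
case: core => [[An0 vP rows cols] min].
apply: (min (A :\ i) N).
- exact: subsetDl.
- exact: subxx.
- move=> [eA]; have : i \in A :\ i by rewrite eA.
  by rewrite !inE eqxx.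
split.
- case: (rows i iA) => r rN ir.
  move: (np r); rewrite rN ir /= negb_forall => /existsP[j].
  rewrite !negb_imply => /andP[jA /andP[ji _]].
  by apply/set0Pn; exists j; rewrite !inE ji.
- case: vP => v [vpos Sv]; exists v; split => // j; rewrite !inE => /andP[_]; exact: Sv.
- by move=> j; rewrite !inE => /andP[_ /rows].
- move=> r rN; case: (cols r rN) => j jA jr.
  case: (eqVneq j i) => [eji|nji]; last by exists j; rewrite // !inE nji.
  subst j; move: (np r); rewrite rN jr /= negb_forall => /existsP[k].
  rewrite !negb_imply => /andP[kA /andP[ki kr]].
  by exists k; rewrite ?lt0n // !inE ki.
Qed.

Lemma cardAN : (#|A| <= #|N|)%N.
Proof.
pose P i r := (0 < inp i r)%N && [forall j in A, (j != i) ==> (inp j r == 0)%N].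
case: (core) => [[An0 _ _ _] _].
case/set0Pn: (An0) => a0 a0A.
case: (@private _ a0A) => r0 r0N _.
pose f i := odflt r0 [pick r in N | P i r].
have fP i : i \in A -> (f i \in N) && P i (f i).
  move=> iA; rewrite /f; case: pickP => [r /andP[rN Pr]|none] /=; first by rewrite rN.
  by case: (@private _ iA) => r rN Pr; move: (none r); rewrite rN /P Pr.
have finj : {in A &, injective f}.
  move=> i j iA jA eij; move: (fP i iA) (fP j jA) => /andP[_ /andP[_ /forallP Hi]].
  rewrite -eij => /andP[_ /andP[jr _]].
  apply/eqP; apply: contraLR isT => /negbTE nij.
  move: (Hi j); rewrite jA eq_sym nij /= => /eqP e.
  by rewrite e in jr.
rewrite -(card_in_imset finj); apply: subset_leq_card.
by apply/subsetP => r /imsetP[i iA ->]; case/andP: (fP i iA).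
Qed.
End Core.
Arguments private {R Sp Rx inp out A N} core {i}.
Arguments kernel0 {R Sp Rx inp out A N} core {x}.
Arguments nonneg {R Sp Rx inp out A N} core {x}.
Arguments cardAN {R Sp Rx inp out A N} core.

Lemma sq_inv (F : fieldType) m n (M : 'M[F]_(m,n)) : m = n -> row_free M^T ->
  exists B : 'M[F]_(n,m), M *m B = 1%:M /\ B *m M = 1%:M.
Proof.
move=> e; subst m; rewrite row_free_unit unitmx_tr => uM.
by exists (invmx M); split; [exact: mulmxV | exact: mulVmx].
Qed.

Lemma rank_eq_in (T : finType) (A : {set T}) x0 (Ax0 : x0 \in A) i k :
  i \in A -> k \in A -> (enum_rank_in Ax0 i == enum_rank_in Ax0 k) = (i == k).
Proof.
move=> iA kA; apply/eqP/eqP => [h|->//].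
by rewrite -(enum_rankK_in Ax0 iA) h enum_rankK_in.
Qed.

Theorem mainTheorem6 (R : realFieldType) (Sp Rx : finType)
  (inp out : Sp -> Rx -> nat) (AC : {set Sp}) (RA : {set Rx}) :
  autocat_core R inp out AC RA ->
  exists B : Rx -> Sp -> R,
    is_inverse_sub inp out AC RA B /\
    (forall k, k \in AC ->
       (forall r, r \in RA -> 0 <= B r k) /\ (exists2 r, r \in RA & B r k != 0)).
Proof.
move=> core.
have [[An0 _ _ _] _] := core.
case/set0Pn: An0 => a0 a0A.
have [b0 b0N _] := private core a0A.
pose M : 'M[R]_(#|AC|, #|RA|) :=
  \matrix_(i, j) stoich R inp out (enum_val i) (enum_val j).
have Minj p (W : 'M[R]_(#|RA|, p)) : M *m W = 0 -> W = 0.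
  move=> MW; apply/matrixP => j c; rewrite mxE.
  pose x r := W (enum_rank_in b0N r) c.
  have hx : forall i, i \in AC -> \sum_(r in RA) stoich R inp out i r * x r = 0.
    move=> i iA; rewrite big_enum_val /=.
    move/matrixP: MW => /(_ (enum_rank_in a0A i) c); rewrite !mxE => e; apply: (etrans _ e).
    apply: eq_bigr => j' _; rewrite mxE enum_rankK_in //.
    by rewrite /x enum_valK_in.
  have := kernel0 core hx _ (enum_valP j); rewrite /x enum_valK_in => ->.
  done.
have rf : row_free M^T.
  rewrite -kermx_eq0; apply/eqP.
  apply: trmx_inj; rewrite trmx0; apply: Minj.
  by have := mulmx_ker M^T; move/(congr1 trmx); rewrite trmx_mul trmxK trmx0.
have eAN : #|AC| = #|RA|.
  apply/eqP; rewrite eqn_leq (cardAN core) /=.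
  move: rf; rewrite /row_free => /eqP <-; exact: rank_leq_col.
have [B [MB BM]] := @sq_inv R _ _ M eAN rf.
pose Bf r k := B (enum_rank_in b0N r) (enum_rank_in a0A k).
have inv1 : forall i k, i \in AC -> k \in AC ->
     \sum_(r in RA) stoich R inp out i r * Bf r k = (i == k)%:R.
  move=> i k iA kA; rewrite big_enum_val /=.
  move/matrixP: MB => /(_ (enum_rank_in a0A i) (enum_rank_in a0A k)).
  rewrite !mxE rank_eq_in // => e; apply: (etrans _ e).
  apply: eq_bigr => j _; rewrite mxE enum_rankK_in //.
  by rewrite /Bf enum_valK_in.
exists Bf; split.
  split => //.
  move=> r l rN lN; rewrite big_enum_val /=.
  move/matrixP: BM => /(_ (enum_rank_in b0N r) (enum_rank_in b0N l)).
  rewrite !mxE rank_eq_in // => e; apply: (etrans _ e).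
  apply: eq_bigr => j _; rewrite mxE enum_rankK_in //.
  by rewrite /Bf enum_valK_in.
move=> k kA; split.
  apply: (nonneg core) => i iA; rewrite inv1 //; exact: ler0n.
case: (boolP [exists r in RA, Bf r k != 0]) => [/existsP[r /andP[rN h]]|].
  by exists r.
move/existsPn => h; exfalso.
have := inv1 k k kA kA; rewrite eqxx big1 => [/eqP|r rN].
  by rewrite eq_sym oner_eq0.
by move: (h r); rewrite rN /= negbK => /eqP->; rewrite mulr0.
Qed.
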